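(* Let $\Gamma$ be a group having a normal abelian subgroup $T$ with the following properties: (i) there is an integer $d \ge 1$ such that $T$ is isomorphic to $\mathbf{Z}^d$; (ii) the action of $\Gamma/T$ on $T$ induced by conjugation is faithful; (iii) the associated representation of $\Gamma/T$ on $T \otimes_{\mathbf Z} \mathbf Q \cong \mathbf Q^d$ is irreducible. Then $\Gamma$ is indecomposable.
   Context: A group $\Gamma$ is called indecomposable if $\Gamma \neq \{1\}$ and, for every isomorphism of $\Gamma$ with a direct product $\Gamma_1 \times \Gamma_2$, one of the groups $\Gamma_1, \Gamma_2$ is trivial. *)

(* Defs.v *)
(* Abstract (possibly infinite) groups are defined here by hand,
   since MathComp's fingroup only covers finite groups. *)
From HB Require Import structures.
From mathcomp Require Import all_boot all_order all_algebra.
Set Implicit Arguments. Unset Strict Implicit. Unset Printing Implicit Defensive.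
Import GRing.Theory Num.Theory.
Local Open Scope ring_scope.

Record AGroup := MkAGroup {
  gcarrier :> Type;
  gmul : gcarrier -> gcarrier -> gcarrier;
  ginv : gcarrier -> gcarrier;
  gone : gcarrier;
  gmulA : forall x y z, gmul x (gmul y z) = gmul (gmul x y) z;
  gmul1 : forall x, gmul gone x = x;
  gmulV : forall x, gmul (ginv x) x = gone }.

Arguments gmul {_}. Arguments ginv {_}. Arguments gone {_}.

Definition trivial_group (G : AGroup) : Prop := forall x : G, x = gone.

Definition is_hom (G H : AGroup) (f : G -> H) : Prop :=
  forall x y, f (gmul x y) = gmul (f x) (f y).

Definition is_iso (G H : AGroup) (f : G -> H) : Prop :=
  is_hom f /\ bijective f.

Section Prod.
Variables G1 G2 : AGroup.
Definition pmul (x y : G1 * G2) : G1 * G2 := (gmul x.1 y.1, gmul x.2 y.2).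
Definition pinv (x : G1 * G2) : G1 * G2 := (ginv x.1, ginv x.2).
Definition pone : G1 * G2 := (gone, gone).
Lemma pmulA x y z : pmul x (pmul y z) = pmul (pmul x y) z.
Proof. by rewrite /pmul /= !gmulA. Qed.
Lemma pmul1 x : pmul pone x = x.
Proof. by case: x => a b; rewrite /pmul /= !gmul1. Qed.
Lemma pmulV x : pmul (pinv x) x = pone.
Proof. by rewrite /pmul /= !gmulV. Qed.
Definition prod_group : AGroup := MkAGroup pmulA pmul1 pmulV.
End Prod.

Definition indecomposable (Gam : AGroup) : Prop :=
  ~ trivial_group Gam /\
  forall (G1 G2 : AGroup) (f : Gam -> prod_group G1 G2),
    is_iso f -> trivial_group G1 \/ trivial_group G2.

Definition is_subgroup (G : AGroup) (T : G -> Prop) : Prop :=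
  T gone /\ (forall x y, T x -> T y -> T (gmul x y)) /\ (forall x, T x -> T (ginv x)).

Definition is_normal (G : AGroup) (T : G -> Prop) : Prop :=
  forall g t, T t -> T (gmul (gmul g t) (ginv g)).

Definition is_abelian_sub (G : AGroup) (T : G -> Prop) : Prop :=
  forall x y, T x -> T y -> gmul x y = gmul y x.

Definition iso_Zd_onto (G : AGroup) (T : G -> Prop) (d : nat)
    (phi : 'rV[int]_d -> G) : Prop :=
  (forall u v, phi (u + v)%R = gmul (phi u) (phi v)) /\ injective phi /\
  (forall x, T x <-> exists v, phi v = x).

(* The conjugation action of Gamma/T on T is faithful: an element of Gamma
   acting trivially on T by conjugation lies in T. *)
Definition conj_faithful (G : AGroup) (T : G -> Prop) : Prop :=
  forall g, (forall t, T t -> gmul (gmul g t) (ginv g) = t) -> T g.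

(* A is the integral matrix (acting on row vectors) of conjugation by g on
   T = phi(Z^d). *)
Definition conj_matrix (G : AGroup) (d : nat) (phi : 'rV[int]_d -> G)
    (g : G) (A : 'M[int]_d) : Prop :=
  forall v, phi (v *m A) = gmul (gmul g (phi v)) (ginv g).

(* The representation of Gamma/T on T (x) Q = Q^d is irreducible: the only
   Q-subspaces of Q^d stable under all conjugation matrices are 0 and Q^d. *)
Definition rep_irreducible (G : AGroup) (d : nat) (phi : 'rV[int]_d -> G) : Prop :=
  forall U : 'M[rat]_d,
    (forall (g : G) (A : 'M[int]_d), conj_matrix phi g A ->
        (U *m map_mx (fun z : int => (z%:~R : rat)) A <= U)%MS) ->
    \rank U = 0%N \/ \rank U = d.

(* Main.v *)
Require Import Defs.
From mathcomp Require Import all_boot all_order all_algebra.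
From Stdlib Require Import Classical.
Set Implicit Arguments. Unset Strict Implicit. Unset Printing Implicit Defensive.
From mathcomp Require Import zify.
Import GRing.Theory Num.Theory.

Section GroupLemmas.
Variable G : AGroup.
Implicit Types x y z : G.

Lemma gmulVr x : gmul x (ginv x) = gone.
Proof.
rewrite -[gmul x (ginv x)]gmul1 -(gmulV (ginv x)).
by rewrite -gmulA [gmul (ginv x) (gmul x (ginv x))]gmulA gmulV gmul1.
Qed.

Lemma gmulr1 x : gmul x gone = x.
Proof. by rewrite -(gmulV x) gmulA gmulVr gmul1. Qed.

Lemma gcancl a x y : gmul a x = gmul a y -> x = y.
Proof. by move=> h; rewrite -(gmul1 x) -(gmul1 y) -(gmulV a) -!gmulA h. Qed.

Lemma gcancr a x y : gmul x a = gmul y a -> x = y.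
Proof. by move=> h; rewrite -(gmulr1 x) -(gmulr1 y) -(gmulVr a) !gmulA h. Qed.
End GroupLemmas.

Lemma hom1 (G H : AGroup) (f : G -> H) : is_hom f -> f gone = gone.
Proof.
move=> hf; apply: (@gcancl _ (f gone)).
by rewrite -hf gmul1 gmulr1.
Qed.

Lemma homV (G H : AGroup) (f : G -> H) x : is_hom f -> f (ginv x) = ginv (f x).
Proof.
move=> hf; apply: (@gcancr _ (f x)).
by rewrite -hf !gmulV (hom1 hf).
Qed.

Local Open Scope ring_scope.

Section Core.
Variables (Gam : AGroup) (T : Gam -> Prop) (d : nat) (phi : 'rV[int]_d -> Gam).
Hypotheses (sT : is_subgroup T) (nT : is_normal T) (iT : iso_Zd_onto T phi)
  (fT : conj_faithful T) (irrT : rep_irreducible phi).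

Lemma phi0 : phi 0 = gone.
Proof.
case: iT => hD _; apply: (@gcancl _ (phi 0)).
by rewrite -hD addr0 gmulr1.
Qed.

Lemma phiN v : phi (- v) = ginv (phi v).
Proof.
case: iT => hD _; apply: (@gcancr _ (phi v)).
by rewrite -hD addNr gmulV phi0.
Qed.

Lemma nontriv_T (K : Gam -> Prop) : is_subgroup K -> is_normal K ->
  (exists g, K g /\ g <> gone) -> exists v, K (phi v) /\ v != 0.
Proof.
move=> [K1 [KM KV]] nK [g [Kg g1]].
have [c [Tc [Kc c1]]] : exists c, T c /\ K c /\ c <> gone.
  case: (classic (T g)) => Tg; first by exists g.
  have : ~ (forall t, T t -> gmul (gmul g t) (ginv g) = t) by move=> h; apply: Tg; apply: fT.
  move/not_all_ex_not => [t ht].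
  have [Tt ne] := imply_to_and _ _ ht.
  exists (gmul (gmul (gmul g t) (ginv g)) (ginv t)); split; last split.
  - case: sT => _ [TM TV]; apply: TM; [exact: nT | exact: TV].
  - rewrite -!gmulA [gmul t (gmul _ _)]gmulA; apply: KM => //.
    by apply: nK; apply: KV.
  - move=> e; apply: ne; apply: (@gcancr _ (ginv t)); by rewrite e gmulVr.
case: iT => _ [_ hT]; case/hT: Tc => v ev.
exists v; split; first by rewrite ev.
apply/eqP => v0; apply: c1; by rewrite -ev v0 phi0.
Qed.

Definition toQ (m n : nat) := map_mx (fun z : int => (z%:~R : rat)) : 'M_(m, n) -> 'M_(m, n).

Lemma toQ_inj m n : injective (@toQ m n).
Proof.
move=> A B /matrixP e; apply/matrixP => i j; move: (e i j); rewrite !mxE.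
exact: intr_inj.
Qed.

Section Lat.
Variable K : Gam -> Prop.
Hypotheses (sK : is_subgroup K) (nK : is_normal K).
Definition L v := K (phi v).

Lemma L0 : L 0.
Proof. by rewrite /L phi0; case: sK. Qed.
Lemma LD u v : L u -> L v -> L (u + v).
Proof. by rewrite /L; case: iT => -> _; case: sK => _ [KM _]; apply: KM. Qed.
Lemma LN v : L v -> L (- v).
Proof. by rewrite /L phiN; case: sK => _ [_ KV]; apply: KV. Qed.
Lemma LMn v n : L v -> L (v *+ n).
Proof. move=> Lv; elim: n => [|n IH]; first by rewrite mulr0n; exact: L0.
by rewrite mulrS; apply: LD. Qed.
Lemma LZ v (z : int) : L v -> L (z *: v).
Proof.
move=> Lv; case: z => n.
  by rewrite -natz scaler_nat; apply: LMn.
by rewrite NegzE scaleNr -natz scaler_nat; apply: LN; apply: LMn.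
Qed.
Lemma LA g A v : conj_matrix phi g A -> L v -> L (v *m A).
Proof. by move=> hA; rewrite /L hA; apply: nK. Qed.

Definition P (W : 'M[rat]_d) := forall w : 'rV[rat]_d, (w <= W)%MS ->
  exists N, (0 < N)%N /\ exists v, L v /\ w *+ N = toQ v.

Lemma P_adds W1 W2 : P W1 -> P W2 -> P (W1 + W2)%MS.
Proof.
move=> P1 P2 w /sub_addsmxP [[u1 u2] /= ->].
have [N1 [N1p [v1 [L1 e1]]]] := P1 _ (submxMl u1 W1).
have [N2 [N2p [v2 [L2 e2]]]] := P2 _ (submxMl u2 W2).
exists (N1 * N2)%N; split; first by rewrite muln_gt0 N1p.
exists (v1 *+ N2 + v2 *+ N1); split; first by apply: LD; apply: LMn.
rewrite /toQ raddfD !raddfMn /= -/(toQ v1) -/(toQ v2) -e1 -e2 mulrnDl.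
by rewrite -!mulrnA mulnC.
Qed.

Lemma P_conj W g A : conj_matrix phi g A -> P W -> P (W *m toQ A).
Proof.
move=> hA PW w /submxP [D ->].
have [N [Np [v [Lv e]]]] := PW _ (submxMl D W).
exists N; split => //; exists (v *m A); split; first exact: LA hA Lv.
by rewrite mulmxA -scaler_nat scalemxAl scaler_nat e /toQ map_mxM.
Qed.

Lemma P_line v : L v -> P <<toQ v>>%MS.
Proof.
move=> Lv w; rewrite genmxE => /submxP [D ->].
rewrite [D]mx11_scalar mul_scalar_mx; set c := D 0 0.
case E: (denq c) (denq_gt0 c) => [n|n] // npos.
exists n; split => //; exists (numq c *: v); split; first exact: LZ.
rewrite scalerMnl /toQ map_mxZ /= numqE E -mulr_natr.
done.
Qed.
Lemma P_max : exists W, P W /\ forall W', P W' -> (W' <= W)%MS.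
Proof.
suff H : forall k W, P W -> (d - \rank W <= k)%N ->
  exists W, P W /\ forall W', P W' -> (W' <= W)%MS.
  apply: (H d 0); last by rewrite leq_subr.
  by move=> w; rewrite submx0 => /eqP ->; exists 1%N; split => //; exists 0;
    split; [exact: L0 | rewrite /toQ map_mx0 mulr1n].
elim=> [|k IH] W PW hk.
  exists W; split => // W' PW'.
  have hs := addsmxSl W W'.
  have [h1 h2] := mxrank_leqif_sup hs.
  have e : \rank W == \rank (W + W')%MS.
    by have := rank_leq_col (W + W')%MS; move=> ?; apply/eqP; lia.
  rewrite h2 in e; exact: submx_trans (addsmxSr W W') e.
case: (classic (forall W', P W' -> (W' <= W)%MS)) => [h|]; first by exists W; split.
move=> hn; have [W' hW'] := not_all_ex_not _ _ hn.
have [PW' nW'] := imply_to_and _ _ hW'.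
apply: (IH (W + W')%MS); first exact: P_adds.
have hs := addsmxSl W W'.
have [h1 h2] := mxrank_leqif_sup hs.
have : \rank W != \rank (W + W')%MS.
  rewrite h2; apply/negP => h; apply: nW'.
  exact: submx_trans (addsmxSr W W') h.
have : (\rank (W + W')%MS <= d)%N by apply: rank_leq_col.
lia.
Qed.
End Lat.

Lemma toQ_eq0 m n (A : 'M[int]_(m, n)) : toQ A = 0 -> A = 0.
Proof. by move=> h; apply: toQ_inj; rewrite h /toQ map_mx0. Qed.

Lemma core (K1 K2 : Gam -> Prop) :
  is_subgroup K1 -> is_normal K1 -> is_subgroup K2 -> is_normal K2 ->
  (forall g, K1 g -> K2 g -> g = gone) ->
  (exists g, K1 g /\ g <> gone) -> (exists g, K2 g /\ g <> gone) -> False.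
Proof.
move=> sK1 nK1 sK2 nK2 disj e1 e2.
have [v1 [K1v1 v1n]] := nontriv_T sK1 nK1 e1.
have [v2 [K2v2 v2n]] := nontriv_T sK2 nK2 e2.
have [W [PW Wmax]] := P_max sK1.
have stab : forall g A, conj_matrix phi g A ->
   (W *m map_mx (fun z : int => (z%:~R : rat)) A <= W)%MS.
  by move=> g A hA; apply: Wmax; apply: (P_conj nK1 hA PW).
case: (irrT stab) => hr.
  have h1 : (toQ v1 <= W)%MS.
    by apply: submx_trans (Wmax _ (P_line sK1 K1v1)); rewrite genmxE.
  move/eqP: hr; rewrite mxrank_eq0 => /eqP W0.
  move: h1; rewrite W0 submx0 => /eqP /toQ_eq0 v10.
  by rewrite v10 eqxx in v1n.
have h2 : (toQ v2 <= W)%MS by apply: submx_full; rewrite /row_full hr.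
have [N [Np [v [Lv e]]]] := PW _ h2.
have ev : v = v2 *+ N by apply: toQ_inj; rewrite -e /toQ raddfMn.
have K2v : K2 (phi v) by rewrite ev; apply: (LMn sK2).
have := disj _ Lv K2v; rewrite -phi0; case: iT => _ [inj _] /inj v0.
have : toQ v2 *+ N == 0 by rewrite e v0 /toQ map_mx0.
rewrite -scaler_nat scaler_eq0 pnatr_eq0 => /orP [/eqP N0|/eqP /toQ_eq0 v20].
  by rewrite N0 in Np.
by rewrite v20 eqxx in v2n.
Qed.
End Core.

Lemma ginv1 (G : AGroup) : ginv (gone : G) = gone.
Proof. by rewrite -[ginv gone]gmulr1 gmulV. Qed.

Section Ker.
Variables (G H : AGroup) (h : G -> H).
Hypothesis hh : is_hom h.
Definition ker g := h g = gone.
Lemma ker_sub : is_subgroup ker.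
Proof.
rewrite /ker; split; first exact: hom1.
split; first by move=> x y hx hy; rewrite hh hx hy gmul1.
by move=> x hx; rewrite homV // hx ginv1.
Qed.
Lemma ker_normal : is_normal ker.
Proof. by move=> g t ht; rewrite /ker !hh ht homV // gmulr1 gmulVr. Qed.
End Ker.

Unset Implicit Arguments.
Theorem proposition1 (Gam : AGroup) (T : Gam -> Prop) (d : nat)
  (phi : 'rV[int]_d -> Gam) :
  is_subgroup T -> is_normal T -> is_abelian_sub T ->
  (1 <= d)%N -> iso_Zd_onto T phi ->
  conj_faithful T ->
  rep_irreducible phi ->
  indecomposable Gam.
Proof.
move=> sT nT _ d1 iT fT irrT; split.
  move=> triv.
  have inj : injective phi by case: iT => _ [].
  have e : (const_mx 1 : 'rV[int]_d) = 0 by apply: inj; rewrite (triv (phi (const_mx 1))) (triv (phi 0)).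
  move/matrixP: e => /(_ 0 (Ordinal d1)); rewrite !mxE => /eqP.
  by rewrite oner_eq0.
move=> G1 G2 f [hf bf].
case: (classic (trivial_group G1)) => t1; first by left.
case: (classic (trivial_group G2)) => t2; first by right.
exfalso.
have [f' fK f'K] := bf.
have h1 : is_hom (fun g => (f g).1) by move=> x y; rewrite hf.
have h2 : is_hom (fun g => (f g).2) by move=> x y; rewrite hf.
apply: (core sT nT iT fT irrT (ker_sub h2) (ker_normal h2) (ker_sub h1) (ker_normal h1)).
- move=> g; rewrite /ker => e2 e1; apply: (bij_inj bf).
  rewrite (hom1 hf); by case: (f g) e1 e2 => a b /= -> ->.
- have [x hx] := not_all_ex_not _ _ t1.
  exists (f' (x, gone)); split; first by rewrite /ker f'K.
  move=> e; apply: hx; have := f'K (x, gone); rewrite e (hom1 hf).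
  by case.
- have [x hx] := not_all_ex_not _ _ t2.
  exists (f' (gone, x)); split; first by rewrite /ker f'K.
  move=> e; apply: hx; have := f'K (gone, x); rewrite e (hom1 hf).
  by case.
Qed.
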